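(* Let $\mathscr{O}$ be an operad in $\mathbbm{k}$-vector spaces ($\mathbbm{k}$ any field) and $\mu\in\mathscr{O}(2)$. The morphisms $\widetilde{\mu}_F(n):\delta F(n)\to F(n)$ (for $F\in\mathcal{F}_{\mathscr{O}}$, $n\in\mathbb{N}$) induce a natural transformation $\widetilde{\mu}:\delta\to\mathrm{Id}$ of endofunctors of $\mathcal{F}_{\mathscr{O}}$ if and only if $\mu$ satisfies the right Leibniz condition: for all $n\in\mathbb{N}$ and all $\nu\in\mathscr{O}(n)$, $$\mu\circ(\nu\boxplus\mathrm{Id}_1)=\nu\circ\mu(n)\quad\text{in } \mathbf{Cat}\,\mathscr{O}(n+1,1)=\mathscr{O}(n+1),$$ where $\mu(n):=\sum_{i=1}^n\mu_i(n)\in\mathbf{Cat}\,\mathscr{O}(n+1,n)$. Moreover, it suffices to check this condition for $\nu$ in a set of generators of the operad $\mathscr{O}$.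
   Context: $\mathbf{Cat}\,\mathscr{O}$ is the $\mathbbm{k}$-linear PROP associated to $\mathscr{O}$: objects $\mathbb{N}$, $\mathbf{Cat}\,\mathscr{O}(m,n)=\bigoplus_{f:\{1..m\}\to\{1..n\}}\bigotimes_{i=1}^n\mathscr{O}(|f^{-1}(i)|)$, symmetric monoidal structure $\boxplus$ given by addition on objects; elements of $\mathscr{O}(k)$ are viewed as morphisms in $\mathbf{Cat}\,\mathscr{O}(k,1)$. $\mathcal{F}_{\mathscr{O}}$ is the category of $\mathbbm{k}$-linear functors from $\mathbf{Cat}\,\mathscr{O}$ to $\mathbbm{k}$-vector spaces. $\delta:\mathcal{F}_{\mathscr{O}}\to\mathcal{F}_{\mathscr{O}}$ is precomposition with $(-)\boxplus 1$: $\delta F(n)=F(n+1)$, $\xi$ acting by $F(\xi\boxplus\mathrm{Id}_1)$. For $1\le i\le n$, $\mu_i(n)\in\mathbf{Cat}\,\mathscr{O}(n+1,n)$ is the element indexed by the map $\{1..n+1\}\to\{1..n\}$, $j\mapsto j$ for $j\le n$, $n+1\mapsto i$, with the identity of $\mathscr{O}(1)$ on singleton fibres and $\mu$ with first input $i$ and second input $n+1$ on the fibre over $i$. $\widetilde{\mu}_F(n):F(n+1)\to F(n)$ is $F(\mu(n))$. *)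

(* Defs.v *)
From HB Require Import structures.
From mathcomp Require Import all_boot all_order all_algebra.
Set Implicit Arguments. Unset Strict Implicit. Unset Printing Implicit Defensive.
Import GRing.Theory.
Local Open Scope ring_scope.

(* Finite ordinals {0,..,m-1} stand for {1,..,m}; maps are finite functions. *)
(* fib f i = |f^{-1}(i)|, fibres being ordered by the natural order.          *)
Definition fib m n (f : {ffun 'I_m -> 'I_n}) (i : 'I_n) : nat :=
  #|[pred x | f x == i]|.

(* Canonical transport O c -> O d along c = d (0 if c <> d; it is only ever  *)
(* used when c = d holds, to identify O(|fibre|) with O(its known size)).    *)
Definition coe (k : fieldType) (O : nat -> lmodType k) (c d : nat) (x : O c)
  : O d :=
  match c =P d with ReflectT e => eq_rect c O x d e | ReflectF _ => 0 end.
Arguments coe {k O c} d x.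

Definition compf m n p (g : {ffun 'I_n -> 'I_p}) (f : {ffun 'I_m -> 'I_n})
  : {ffun 'I_m -> 'I_p} := [ffun x => g (f x)].

Lemma fibmap_mem m n p (g : {ffun 'I_n -> 'I_p}) (f : {ffun 'I_m -> 'I_n})
  (j : 'I_p) (x : 'I_(fib (compf g f) j)) :
  f (enum_val x) \in [pred b | g b == j].
Proof. have := enum_valP x; by rewrite !inE ffunE. Qed.

(* The induced (order-preserving on fibres) map (g o f)^{-1}(j) -> g^{-1}(j). *)
Definition fibmap m n p (g : {ffun 'I_n -> 'I_p}) (f : {ffun 'I_m -> 'I_n})
  (j : 'I_p) : {ffun 'I_(fib (compf g f) j) -> 'I_(fib g j)} :=
  [ffun x => enum_rank_in (fibmap_mem x) (f (enum_val x))].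

Section OperadAxioms.
Variable k : fieldType.
Variable O : nat -> lmodType k.
Variable idO : O 1.
(* composition along a map f : m -> n : gam f mu (nu_i)_i is the composite  *)
(* mu o (nu_1, ..., nu_n) followed by the unshuffle permutation putting the  *)
(* inputs of nu_i at the positions f^{-1}(i) (natural order).               *)
Variable gam : forall m n (f : {ffun 'I_m -> 'I_n}),
  O n -> (forall i, O (fib f i)) -> O m.
Arguments gam {m n}.

Definition compnu m n p (g : {ffun 'I_n -> 'I_p}) (f : {ffun 'I_m -> 'I_n})
  (nu : forall i, O (fib f i)) (j : 'I_p) :
  forall y : 'I_(fib g j), O (fib (fibmap g f j) y) :=
  fun y => coe _ (nu (enum_val y)).

(* the component over j of the composite (g, mu) o (f, nu) in Cat O *)
Definition compfib m n p (g : {ffun 'I_n -> 'I_p}) (mu : forall j, O (fib g j))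
  (f : {ffun 'I_m -> 'I_n}) (nu : forall i, O (fib f i)) (j : 'I_p)
  : O (fib (compf g f) j) :=
  @gam _ _ (fibmap g f j) (mu j) (@compnu _ _ _ g f nu j).

Definition operad_axioms : Prop :=
  [/\
      (forall m n (f : {ffun 'I_m -> 'I_n}) (a : k) x y nu,
          gam f (a *: x + y) nu = a *: gam f x nu + gam f y nu),
      (forall m n (f : {ffun 'I_m -> 'I_n}) mu nu i (a : k) x y,
          gam f mu (dfwith nu (i := i) (a *: x + y))
          = a *: gam f mu (dfwith nu (i := i) x) + gam f mu (dfwith nu (i := i) y)),
      (forall n (mu : O n), gam [ffun x : 'I_n => x] mu (fun i => coe _ idO) = mu),
      (forall m (f : {ffun 'I_m -> 'I_1}) (nu : O m),
          gam f idO (fun i => coe _ nu) = nu) &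
      (forall m n p (f : {ffun 'I_m -> 'I_n}) (g : {ffun 'I_n -> 'I_p})
              (l : O p) (mu : forall j, O (fib g j)) (nu : forall i, O (fib f i)),
          gam f (gam g l mu) nu = gam (compf g f) l (compfib mu nu))].
End OperadAxioms.

(* A (symmetric) operad in k-vector spaces, presented by its compositions   *)
(* along all maps of finite ordinals (this encodes gamma and the Sigma_n-    *)
(* actions, the latter being composition along bijections with units).     *)
Record operad (k : fieldType) := Operad {
  ops : nat -> lmodType k;
  op_id : ops 1;
  op_comp : forall m n (f : {ffun 'I_m -> 'I_n}),
      ops n -> (forall i, ops (fib f i)) -> ops m;
  op_axioms : operad_axioms op_id op_comp }.

Section CatO.
Variable k : fieldType.
Variable O : operad k.

(* Elementary tensors of Cat O(m, n) = (+)_f (x)_i O(|f^{-1}(i)|):  a map f *)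
(* together with one element of O(|f^{-1}(i)|) for each i.  They span      *)
(* Cat O(m, n).                                                             *)
Record elm (m n : nat) := Elm {
  emap : {ffun 'I_m -> 'I_n};
  eten : forall i, ops O (fib emap i) }.

Definition ecomp m n p (e2 : elm n p) (e1 : elm m n) : elm m p :=
  @Elm m p (compf (emap e2) (emap e1))
    (compfib (@op_comp k O) (eten e2) (eten e1)).

Definition eid n : elm n n :=
  @Elm n n [ffun x => x] (fun i => coe _ (op_id O)).

Definition ebox1 m n (e : elm m n) : elm m.+1 n.+1 :=
  let F := [ffun x : 'I_m.+1 =>
              if unlift ord_max x is Some x' then lift ord_max (emap e x')
              else ord_max] in
  @Elm m.+1 n.+1 F
    (fun j => if unlift ord_max j is Some j' then coe _ (eten e j')
              else coe _ (op_id O)).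

Definition el_of n (x : ops O n) : elm n 1 :=
  @Elm n 1 [ffun _ => ord0] (fun i => coe _ x).

(* Cat O(m, 1) = O(m) *)
Definition val1 m (e : elm m 1) : ops O m := coe m (eten e ord0).

(* mu_i(n) in Cat O(n+1, n)  (i : 'I_n stands for i+1) *)
Definition mu_i (mu : ops O 2) n (i : 'I_n) : elm n.+1 n :=
  @Elm n.+1 n [ffun x : 'I_n.+1 => if unlift ord_max x is Some x' then x' else i]
    (fun j => if j == i then coe _ mu else coe _ (op_id O)).

(* k-linear functors Cat O -> k-vector spaces, given on the spanning        *)
(* elementary tensors (multilinear in the tensor factors).                  *)
Definition rep_axioms (obj : nat -> lmodType k)
  (act : forall m n, elm m n -> obj m -> obj n) : Prop :=
  let act := fun m n => @act m n in
  [/\ (forall m n (e : elm m n) (a : k) u v,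
          act _ _ e (a *: u + v) = a *: act _ _ e u + act _ _ e v),
      (forall m n (f : {ffun 'I_m -> 'I_n}) (nu : forall i, ops O (fib f i))
              i (a : k) x y w,
          act _ _ (Elm (dfwith nu (i := i) (a *: x + y))) w
          = a *: act _ _ (Elm (dfwith nu (i := i) x)) w
            + act _ _ (Elm (dfwith nu (i := i) y)) w),
      (forall n v, act _ _ (eid n) v = v) &
      (forall m n p (e2 : elm n p) (e1 : elm m n) v,
          act _ _ (ecomp e2 e1) v = act _ _ e2 (act _ _ e1 v))].

Record rep := Rep {
  robj : nat -> lmodType k;
  ract : forall m n, elm m n -> robj m -> robj n;
  rep_ax : rep_axioms ract }.
Arguments ract r {m n}.

Definition rep_hom (F G : rep) (al : forall n, robj F n -> robj G n) : Prop :=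
  (forall n (a : k) u v, al n (a *: u + v) = a *: al n u + al n v) /\
  (forall m n (e : elm m n) v, al n (ract F e v) = ract G e (al m v)).

Definition mutilde (mu : ops O 2) (F : rep) n (v : robj F n.+1) : robj F n :=
  \sum_(i < n) ract F (mu_i mu i) v.

Definition mutilde_natural (mu : ops O 2) : Prop :=
  (forall (F : rep) m n (e : elm m n) (v : robj F m.+1),
      mutilde mu (ract F (ebox1 e) v) = ract F e (mutilde mu v)) /\
  (forall (F G : rep) (al : forall n, robj F n -> robj G n),
      rep_hom al -> forall n (v : robj F n.+1),
      al n (mutilde mu v) = mutilde mu (al n.+1 v)).

Definition leibniz_at (mu : ops O 2) n (nu : ops O n) : Prop :=
  val1 (ecomp (el_of mu) (ebox1 (el_of nu)))
  = \sum_(i < n) val1 (ecomp (el_of nu) (mu_i mu i)).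

Definition leibniz (mu : ops O 2) : Prop :=
  forall n (nu : ops O n), leibniz_at mu nu.

(* S generates O: the smallest sub-operad (sub-k-vector spaces closed under *)
(* all compositions, hence also under Sigma_n-actions, containing the unit) *)
(* containing S is O.                                                       *)
Definition generates (S : forall n, ops O n -> Prop) : Prop :=
  forall P : forall n, ops O n -> Prop,
    (forall n x, S n x -> P n x) ->
    P 1 (op_id O) ->
    (forall n, P n 0) ->
    (forall n (a : k) x y, P n x -> P n y -> P n (a *: x + y)) ->
    (forall m n (f : {ffun 'I_m -> 'I_n}) mu nu,
        P n mu -> (forall i, P (fib f i) (nu i)) -> P m (@op_comp k O m n f mu nu)) ->
    forall n x, P n x.
End CatO.

(* Main.v *)
Require Import Defs.
From HB Require Import structures.
From mathcomp Require Import all_boot all_order all_algebra.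
From mathcomp Require Import boolp.
From Stdlib Require Import FunctionalExtensionality ProofIrrelevance.
Set Implicit Arguments. Unset Strict Implicit. Unset Printing Implicit Defensive.

Import GRing.Theory.

Section Enum.
Variable N : nat.

Lemma ev_val (A : {pred 'I_N}) (x : 'I_#|A|) :
  val (enum_val x) = nth 0 (map val (enum A)) x.
Proof.
rewrite (enum_val_nth (enum_val x)) (nth_map (enum_val x)) //.
by rewrite -cardE.
Qed.

Lemma er_val (A : {pred 'I_N}) y0 (Ay : y0 \in A) y : y \in A ->
  val (enum_rank_in Ay y) = index (val y) (map val (enum A)).
Proof.
move=> yA; rewrite enum_rank_in.unlock val_insubd index_map; last exact: val_inj.
have -> : (index y (enum A) < #|A|) by rewrite cardE index_mem mem_enum.
done.
Qed.

Lemma enum_char (A : {pred 'I_N}) (Q : pred nat) :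
  (forall x : 'I_N, (x \in A) = Q (val x)) ->
  map val (enum A) = filter Q (iota 0 N).
Proof.
move=> HA; rewrite /enum_mem -enumT -val_enum_ord filter_map.
congr map; apply: eq_filter => x /=; exact: HA.
Qed.

Lemma size_enum_val (A : {pred 'I_N}) : #|A| = size (map val (enum A)).
Proof. by rewrite size_map cardE. Qed.

Section Full.
Variable A : {pred 'I_N}.
Hypothesis HA : forall x, x \in A.
Lemma full_enum : map val (enum A) = iota 0 N.
Proof. by rewrite (@enum_char A predT) ?filter_predT. Qed.
Lemma full_card : #|A| = N.
Proof. by rewrite size_enum_val full_enum size_iota. Qed.
Lemma full_ev (x : 'I_#|A|) : val (enum_val x) = val x.
Proof.
rewrite ev_val full_enum nth_iota //.
by have := ltn_ord x; move: (val x) => v; rewrite full_card.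
Qed.
Lemma full_er y0 (Ay : y0 \in A) y : val (enum_rank_in Ay y) = val y.
Proof.
rewrite er_val // full_enum.
have Hy : val y < N := ltn_ord y.
move: (val y) Hy => v Hv.
have := nth_iota 0 0 Hv; rewrite add0n => {1}<-.
by rewrite index_uniq ?iota_uniq ?size_iota.
Qed.
End Full.
End Enum.

Lemma enum_gen m (A : {pred 'I_m.+1}) (B : {pred 'I_m}) (b : bool) :
  (forall x, (lift ord_max x \in A) = (x \in B)) -> (ord_max \in A) = b ->
  map val (enum A) = map val (enum B) ++ (if b then [:: m] else [::]).
Proof.
move=> HL HM.
pose Qf := fun v => if @insub nat (fun v => v < m) 'I_m v is Some x then x \in B else false.
rewrite (@enum_char _ B Qf); last by move=> x; rewrite /Qf valK.
rewrite (@enum_char _ A (fun v => if v < m then Qf v else (v == m) && b)).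
  rewrite -addn1 iotaD filter_cat /= add0n ltnn eqxx /=.
  congr (_ ++ _).
  apply: eq_in_filter => v; rewrite mem_iota add0n => /andP[_ ->] //.
move=> x; case: (unliftP ord_max x) => [x'|] ->.
  rewrite HL. have -> : val (lift ord_max x') = val x' by exact: lift_max.
  rewrite ltn_ord /Qf.
  by rewrite (_ : insub (val x') = Some x') // valK.
by rewrite HM /= ltnn eqxx.
Qed.

Lemma enum_pred1 n (j : 'I_n) : map val (enum [pred x | x == j]) = [:: val j].
Proof.
rewrite (@enum_char _ _ (pred1 (val j))); last by move=> x; rewrite inE /=.
by rewrite filter_pred1_uniq ?iota_uniq // mem_iota add0n /=.
Qed.

Lemma mem_enum_lt m (B : {pred 'I_m}) v : v \in map val (enum B) -> v < m.
Proof. move=> /mapP [x _ ->]; exact: ltn_ord. Qed.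


Lemma index_iota0 N v : v < N -> index v (iota 0 N) = v.
Proof.
move=> Hv; have := nth_iota 0 0 Hv; rewrite add0n => {1}<-.
by rewrite index_uniq ?iota_uniq ?size_iota.
Qed.

Definition boxmap m n (f : {ffun 'I_m -> 'I_n}) : {ffun 'I_m.+1 -> 'I_n.+1} :=
  [ffun x : 'I_m.+1 => if unlift ord_max x is Some x' then lift ord_max (f x') else ord_max].
Definition mumap n (i : 'I_n) : {ffun 'I_n.+1 -> 'I_n} :=
  [ffun x : 'I_n.+1 => if unlift ord_max x is Some x' then x' else i].

Lemma seq_ext m n (f : {ffun 'I_m -> 'I_n}) (h : {ffun 'I_m.+1 -> 'I_n}) i j :
  (forall x, h (lift ord_max x) = f x) -> h ord_max = i ->
  map val (enum [pred x | h x == j]) =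
  map val (enum [pred x | f x == j]) ++ (if i == j then [:: m] else [::]).
Proof.
move=> HL HM; apply: enum_gen => [x|]; by rewrite !inE ?HL ?HM.
Qed.

Lemma seq_mumap n (i j : 'I_n) :
  map val (enum [pred x | mumap i x == j]) = val j :: (if i == j then [:: n] else [::]).
Proof.
rewrite (@seq_ext n n [ffun x => x] _ i j).
- rewrite (_ : map val _ = [:: val j]) //.
  rewrite -(enum_pred1 j); congr (map val _); apply: eq_enum => x; by rewrite !inE ffunE.
- by move=> x; rewrite !ffunE liftK.
- by rewrite ffunE unlift_none.
Qed.

Lemma seq_box m n (f : {ffun 'I_m -> 'I_n}) z :
  map val (enum [pred x | boxmap f x == z]) =
  if unlift ord_max z is Some j then map val (enum [pred x | f x == j]) else [:: m].
Proof.
case: (unliftP ord_max z) => [j|] ->.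
  rewrite (@enum_gen m _ [pred x | f x == j] false) ?cats0 //.
    by move=> x; rewrite !inE ffunE liftK (inj_eq lift_inj).
  by rewrite inE ffunE unlift_none eq_liftF.
rewrite (@enum_gen m _ [pred x | false] true) //.
- by rewrite (@enum_char _ _ pred0) // filter_pred0.
- by move=> x; rewrite !inE ffunE liftK lift_eqF.
- by rewrite inE ffunE unlift_none eqxx.
Qed.

Lemma fib_box m n (f : {ffun 'I_m -> 'I_n}) z :
  fib (boxmap f) z = if unlift ord_max z is Some j then fib f j else 1%N.
Proof.
rewrite /fib size_enum_val seq_box; case: unlift => // j.
by rewrite -size_enum_val.
Qed.

Lemma fib_mumap n (i j : 'I_n) : fib (mumap i) j = if i == j then 2 else 1.
Proof. by rewrite /fib size_enum_val seq_mumap; case: (i == j). Qed.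

Lemma fib_ext m n (f : {ffun 'I_m -> 'I_n}) (h : {ffun 'I_m.+1 -> 'I_n}) i j :
  (forall x, h (lift ord_max x) = f x) -> h ord_max = i ->
  fib h j = (fib f j + (i == j))%N.
Proof.
move=> HL HM; rewrite /fib size_enum_val (seq_ext _ HL HM) size_cat -size_enum_val.
by case: (i == j).
Qed.

Lemma ev_ext m n (f : {ffun 'I_m -> 'I_n}) (h : {ffun 'I_m.+1 -> 'I_n}) i j
  (HL : forall x, h (lift ord_max x) = f x) (HM : h ord_max = i) (y : 'I_(fib h j)) :
  val (enum_val y) =
  nth 0 (map val (enum [pred x | f x == j]) ++ (if i == j then [:: m] else [::])) y.
Proof. by rewrite ev_val (seq_ext _ HL HM). Qed.

Lemma lift_maxv n (x : 'I_n) : val (lift (@ord_max n) x) = val x.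
Proof. exact: lift_max. Qed.

Lemma bump_lt n (j : 'I_n) : bump n j = j.
Proof. by rewrite /bump leqNgt ltn_ord. Qed.

Lemma boxmap_lift m n (f : {ffun 'I_m -> 'I_n}) x : boxmap f (lift ord_max x) = lift ord_max (f x).
Proof. by rewrite ffunE liftK. Qed.
Lemma boxmap_max m n (f : {ffun 'I_m -> 'I_n}) : boxmap f ord_max = ord_max.
Proof. by rewrite ffunE unlift_none. Qed.
Lemma mumap_lift n (i : 'I_n) x : mumap i (lift ord_max x) = x.
Proof. by rewrite ffunE liftK. Qed.
Lemma mumap_max n (i : 'I_n) : mumap i ord_max = i.
Proof. by rewrite ffunE unlift_none. Qed.

Lemma fib_id n (b : 'I_n) : fib [ffun x : 'I_n => x] b = 1%N.
Proof.
rewrite /fib size_enum_val.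
have -> : enum [pred x | [ffun x : 'I_n => x] x == b] = enum [pred x | x == b].
  by apply: eq_enum => x; rewrite !inE ffunE.
by rewrite enum_pred1.
Qed.

Lemma uniq_enum_val N (A : {pred 'I_N}) : uniq (map val (enum A)).
Proof. by rewrite map_inj_uniq ?enum_uniq //; exact: val_inj. Qed.

Import GRing.Theory.
Local Open Scope ring_scope.

Section Coe.
Variable k : fieldType.
Variable O : nat -> lmodType k.

Lemma coe_id c (x : O c) : coe c x = x.
Proof. by rewrite /coe; case: eqP => // e; rewrite eq_axiomK. Qed.

Lemma coeK b c d (x : O b) : b = c -> coe d (coe c x) = coe d x.
Proof. by move=> e; subst c; rewrite coe_id. Qed.

Lemma coe_lin c d (a : k) (x y : O c) : coe d (a *: x + y) = a *: coe d x + coe d y.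
Proof.
rewrite /coe; case: eqP => [e|_]; last by rewrite scaler0 addr0.
by subst d.
Qed.

Lemma coe0 c d : coe d (0 : O c) = 0.
Proof. rewrite /coe; case: eqP => [e|_] //; by subst d. Qed.

Lemma coe_sum c d (I : finType) (F : I -> O c) :
  coe d (\sum_(i : I) F i) = \sum_(i : I) coe d (F i).
Proof.
apply: big_morph.
  by move=> x y; have := coe_lin d 1 x y; rewrite !scale1r.
exact: coe0.
Qed.
End Coe.

Import GRing.Theory.
Local Open Scope ring_scope.

Section Op.
Variable k : fieldType.
Variable O : operad k.
Local Notation gam f := (@op_comp k O _ _ f).
Local Notation OO := (ops O).

Lemma gam_tr m n m' n' (em : m = m') (en : n = n') (f : {ffun 'I_m -> 'I_n})
  (f' : {ffun 'I_m' -> 'I_n'}) (x : OO n) (nu : forall i, OO (fib f i))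
  (nu' : forall i, OO (fib f' i)) :
  (forall a, val (f' (cast_ord em a)) = val (f a)) ->
  (forall b, nu' (cast_ord en b) = coe _ (nu b)) ->
  coe m' (gam f x nu) = gam f' (coe n' x) nu'.
Proof.
subst m' n' => Hf Hnu; rewrite !coe_id.
have ef : f' = f by apply/ffunP => a; apply: val_inj; rewrite -Hf cast_ord_id.
subst f'.
have -> // : nu' = nu.
apply: functional_extensionality_dep => b.
by have := Hnu b; rewrite cast_ord_id coe_id.
Qed.

Lemma fib_fibmap m n p (g : {ffun 'I_n -> 'I_p}) (f : {ffun 'I_m -> 'I_n}) j y :
  fib (fibmap g f j) y = fib f (enum_val y).
Proof.
rewrite /fib -!sum1_card.
set B := [pred x | compf g f x == j].
transitivity (\sum_(x < #|B| | f (enum_val x) == enum_val y) 1)%N.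
  apply: eq_bigl => x; rewrite !inE ffunE.
  apply/eqP/eqP => [<-|H]; first by rewrite enum_rankK_in // fibmap_mem.
  apply: enum_val_inj; rewrite enum_rankK_in //.
  by rewrite H; have := enum_valP y.
transitivity (\sum_(x in B | f x == enum_val y) 1)%N.
  by rewrite (big_enum_val_cond (A:=B)).
rewrite -sum1_card; apply: eq_bigl => x; rewrite !inE ffunE. 
case: (f x =P enum_val y) => [->|]; rewrite ?andbF ?andbT //.
by have := enum_valP y; rewrite inE.
Qed.


Lemma fib1_full n (c : {ffun 'I_n -> 'I_1}) (j : 'I_1) :
  forall x, x \in [pred x | c x == j].
Proof. by move=> x; rewrite inE !ord1. Qed.

Lemma fib1_card n (c : {ffun 'I_n -> 'I_1}) (j : 'I_1) : fib c j = n.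
Proof. exact: full_card (fib1_full c j). Qed.

Lemma Klem m n (h : {ffun 'I_m -> 'I_n}) (t : forall i, OO (fib h i)) (y : OO n) :
  Defs.val1 (ecomp (el_of y) (Elm t)) = gam h y t.
Proof.
rewrite /Defs.val1 /ecomp /= /compfib /=.
set c0 := [ffun _ => ord0] : {ffun 'I_n -> 'I_1}.
have full1 : fib c0 ord0 = n by exact: fib1_card.
have fullm : fib (compf c0 h) ord0 = m by exact: fib1_card.
rewrite (@gam_tr _ _ _ _ fullm full1 _ h _ _ t).
- by rewrite coeK // coe_id.
- move=> a; rewrite ffunE full_er; last exact: fib1_full.
  congr val; congr (h _); apply: val_inj; rewrite /= full_ev //; exact: fib1_full.
- move=> b.
  have e : enum_val b = cast_ord full1 b.
    by apply: val_inj; rewrite /= full_ev //; exact: fib1_full.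
  rewrite /compnu e coeK ?coe_id //.
  by rewrite fib_fibmap e.
Qed.

Lemma gam_linl m n (f : {ffun 'I_m -> 'I_n}) (a : k) x y nu :
  gam f (a *: x + y) nu = a *: gam f x nu + gam f y nu.
Proof. by case: (op_axioms O) => H *; apply: H. Qed.
Lemma gam_linr m n (f : {ffun 'I_m -> 'I_n}) mu nu i (a : k) x y :
  gam f mu (dfwith nu (i := i) (a *: x + y))
  = a *: gam f mu (dfwith nu (i := i) x) + gam f mu (dfwith nu (i := i) y).
Proof. by case: (op_axioms O) => _ H *; apply: H. Qed.
Lemma gam_u1 n (mu : OO n) : gam [ffun x : 'I_n => x] mu (fun i => coe _ (op_id O)) = mu.
Proof. by case: (op_axioms O) => _ _ H *; apply: H. Qed.
Lemma gam_u2 m (f : {ffun 'I_m -> 'I_1}) (nu : OO m) :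
  gam f (op_id O) (fun i => coe _ nu) = nu.
Proof. by case: (op_axioms O) => _ _ _ H *; apply: H. Qed.
Lemma gam_assoc m n p (f : {ffun 'I_m -> 'I_n}) (g : {ffun 'I_n -> 'I_p})
  (l : OO p) (mu : forall j, OO (fib g j)) (nu : forall i, OO (fib f i)) :
  gam f (gam g l mu) nu = gam (compf g f) l (compfib (@op_comp k O) mu nu).
Proof. by case: (op_axioms O) => _ _ _ _ H *; apply: H. Qed.

Lemma fibmap_val m n p (g : {ffun 'I_n -> 'I_p}) (h : {ffun 'I_m -> 'I_n}) j y :
  val (fibmap g h j y) = index (val (h (enum_val y))) (map val (enum [pred b | g b == j])).
Proof. by rewrite ffunE er_val // fibmap_mem. Qed.
End Op.

Import GRing.Theory.
Local Open Scope ring_scope.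

Section Test.
Variable k : fieldType.
Variable O : operad k.
Local Notation gam f := (@op_comp k O _ _ f).
Local Notation OO := (ops O).
Variable N : nat.

Record lmap (p : nat) := LMap {
  lm :> OO p -> OO N;
  lm_lin : forall (a : k) x y, lm (a *: x + y) = a *: lm x + lm y }.

Lemma lmap_eq p (f g : lmap p) : (forall y, f y = g y) -> f = g.
Proof.
case: f => f fl; case: g => g gl /= H.
have E : f = g by apply: functional_extensionality.
subst g; congr LMap; exact: proof_irrelevance.
Qed.

HB.instance Definition _ p := gen_eqMixin (lmap p).
HB.instance Definition _ p := gen_choiceMixin (lmap p).

Section Ops.
Variable p : nat.
Program Definition lm0 : lmap p := @LMap p (fun _ => 0) _.
Next Obligation. by rewrite scaler0 addr0. Qed.
Program Definition lmadd (f g : lmap p) : lmap p := @LMap p (fun y => f y + g y) _.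
Next Obligation. by rewrite !lm_lin scalerDr addrACA. Qed.
Program Definition lmopp (f : lmap p) : lmap p := @LMap p (fun y => - f y) _.
Next Obligation. by rewrite lm_lin opprD scalerN. Qed.
Program Definition lmscale (a : k) (f : lmap p) : lmap p := @LMap p (fun y => a *: f y) _.
Next Obligation. by rewrite lm_lin scalerDr !scalerA mulrC. Qed.

Lemma lmaddA : associative lmadd.
Proof. by move=> f g h; apply: lmap_eq => y /=; rewrite addrA. Qed.
Lemma lmaddC : commutative lmadd.
Proof. by move=> f g; apply: lmap_eq => y /=; rewrite addrC. Qed.
Lemma lmadd0 : left_id lm0 lmadd.
Proof. by move=> f; apply: lmap_eq => y /=; rewrite add0r. Qed.
Lemma lmaddN : left_inverse lm0 lmopp lmadd.
Proof. by move=> f; apply: lmap_eq => y /=; rewrite addNr. Qed.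
End Ops.

HB.instance Definition _ p := GRing.isZmodule.Build (lmap p)
  (@lmaddA p) (@lmaddC p) (@lmadd0 p) (@lmaddN p).

Section Ops2.
Variable p : nat.
Lemma lmscaleA a b (v : lmap p) : lmscale a (lmscale b v) = lmscale (a * b) v.
Proof. by apply: lmap_eq => y /=; rewrite scalerA. Qed.
Lemma lmscale1 : left_id 1 (@lmscale p).
Proof. by move=> f; apply: lmap_eq => y /=; rewrite scale1r. Qed.
Lemma lmscaleDr : right_distributive (@lmscale p) +%R.
Proof. by move=> a f g; apply: lmap_eq => y /=; rewrite scalerDr. Qed.
Lemma lmscaleDl (v : lmap p) : {morph (@lmscale p)^~ v: a b / a + b}.
Proof. by move=> a b; apply: lmap_eq => y /=; rewrite scalerDl. Qed.
End Ops2.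

HB.instance Definition _ p := GRing.Zmodule_isLmodule.Build k (lmap p)
  (@lmscaleA p) (@lmscale1 p) (@lmscaleDr p) (@lmscaleDl p).

Lemma lm_add p (f g : lmap p) y : (f + g) y = f y + g y. Proof. by []. Qed.
Lemma lm_scale p a (f : lmap p) y : (a *: f) y = a *: f y. Proof. by []. Qed.
Lemma lm_zero p y : (0 : lmap p) y = 0. Proof. by []. Qed.
Lemma lm_sum p (I : finType) (F : I -> lmap p) y :
  (\sum_(i : I) F i) y = \sum_(i : I) F i y.
Proof.
apply: (big_morph (fun f : lmap p => f y)) => //.
Qed.


Definition comp1 m n (y : OO n) (x : elm O m n) : OO m := Defs.val1 (ecomp (el_of y) x).

Program Definition tact m n (x : elm O m n) (f : lmap m) : lmap n :=
  @LMap n (fun y => f (comp1 y x)) _.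
Next Obligation. by case: x => h t; rewrite /comp1 !Klem gam_linl lm_lin. Qed.

Lemma tact_ax : rep_axioms tact.
Proof.
split.
- by move=> m n e a u v; apply: lmap_eq.
- move=> m n f nu i a x y w; apply: lmap_eq => z /=.
  by rewrite /comp1 !Klem gam_linr lm_lin.
- by move=> n v; apply: lmap_eq => z /=; rewrite /comp1 /eid Klem gam_u1.
- move=> m n p [g t2] [f t1] v; apply: lmap_eq => z /=.
  by rewrite /comp1 /ecomp /= !Klem gam_assoc.
Qed.

Definition trep : rep O := @Rep k O (fun p => lmap p : lmodType k) tact tact_ax.

End Test.

Import GRing.Theory.
Local Open Scope ring_scope.

Section Main.
Variable k : fieldType.
Variable O : operad k.
Local Notation gam f := (@op_comp k O _ _ f).
Local Notation OO := (ops O).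
Variable mu : OO 2.

Program Definition lm_id N : lmap O N N := @LMap k O N N (fun y => y) _.

Lemma comp1_id_mu : comp1 (op_id O) (mu_i mu (ord0 : 'I_1)) = mu.
Proof.
rewrite /comp1 /mu_i Klem.
rewrite -[in RHS](gam_u2 [ffun x : 'I_2 => if unlift ord_max x is Some x' then x' else ord0] mu).
congr (gam _ _ _); apply: functional_extensionality_dep => j.
by have -> : j == ord0 by rewrite [j]ord1.
Qed.

Lemma comp1_id_el n (nu : OO n) : comp1 (op_id O) (el_of nu) = nu.
Proof. by rewrite /comp1 /el_of Klem gam_u2. Qed.

Lemma nat_leib : mutilde_natural mu -> leibniz mu.
Proof.
move=> [Hn _] n nu.
have H := Hn (trep O n.+1) n 1 (el_of nu) (lm_id n.+1).
have := f_equal (fun f : lmap O n.+1 1 => f (op_id O)) H.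
rewrite /mutilde /= !lm_sum big_ord1 /= comp1_id_mu comp1_id_el.
by rewrite /leibniz_at /comp1 => ->.
Qed.

End Main.

Import GRing.Theory.
Local Open Scope ring_scope.

Section A.
Variable k : fieldType.
Variable O : operad k.
Local Notation gam f := (@op_comp k O _ _ f).
Local Notation OO := (ops O).
Variable mu : OO 2.

Lemma elm_eq m n (h h' : {ffun 'I_m -> 'I_n}) (t : forall i, OO (fib h i))
  (t' : forall i, OO (fib h' i)) :
  h = h' -> (forall j, t' j = coe _ (t j)) -> Elm t = Elm t'.
Proof.
move=> E; subst h' => H; have -> // : t' = t.
by apply: functional_extensionality_dep => j; rewrite H coe_id.
Qed.

Lemma gam_trR m' n' m'' n'' (em : m' = m'') (en : n' = n'')
  (f1 : {ffun 'I_m' -> 'I_n'}) (f2 : {ffun 'I_m'' -> 'I_n''}) (x : OO n')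
  (nu1 : forall i, OO (fib f1 i)) (nu2 : forall i, OO (fib f2 i)) :
  (forall a, val (f2 (cast_ord em a)) = val (f1 a)) ->
  (forall b, nu2 (cast_ord en b) = coe _ (nu1 b)) ->
  gam f2 (coe n'' x) nu2 = coe m'' (gam f1 x nu1).
Proof. by move=> H1 H2; rewrite (gam_tr x H1 H2). Qed.

Lemma ord1_val (N : nat) (e : 1%N = N) (w : 'I_N) : val w = 0%N.
Proof. by subst N; rewrite [w]ord1. Qed.

Lemma gam_trS m' m'' n' (em : m' = m'')
  (f1 : {ffun 'I_m' -> 'I_n'}) (f2 : {ffun 'I_m'' -> 'I_n'}) (x : OO n')
  (nu1 : forall i, OO (fib f1 i)) (nu2 : forall i, OO (fib f2 i)) :
  (forall a, val (f2 (cast_ord em a)) = val (f1 a)) ->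
  (forall b, nu2 b = coe _ (nu1 b)) ->
  gam f2 x nu2 = coe m'' (gam f1 x nu1).
Proof.
move=> H1 H2; rewrite -(@gam_trR _ _ _ _ em erefl f1 f2 x nu1 nu2) ?coe_id //.
by move=> b; rewrite cast_ord_id.
Qed.

Definition Lb c (x : OO c) := Defs.val1 (ecomp (el_of mu) (ebox1 (el_of x))).
Definition Rb c (x : OO c) (p : 'I_c) := Defs.val1 (ecomp (el_of x) (mu_i mu p)).

Variables (m n : nat) (f : {ffun 'I_m -> 'I_n}) (nu : forall i, OO (fib f i)).

Definition G (i : 'I_n) : {ffun 'I_m.+1 -> 'I_n} :=
  [ffun x => if unlift ord_max x is Some x' then f x' else i].
Definition nuE i : forall j, OO (fib (G i) j) := fun j => coe _ (nu j).

Lemma parta i :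
  ecomp (mu_i mu i) (ebox1 (Elm nu)) = Elm (dfwith (nuE i) (i := i) (coe _ (Lb (nu i)))).
Proof.
have HL : forall x, compf (mumap i) (boxmap f) (lift ord_max x) = f x.
  by move=> x; rewrite /compf /mumap /boxmap !ffunE liftK liftK.
have HM : compf (mumap i) (boxmap f) ord_max = i.
  by rewrite /compf /mumap /boxmap !ffunE unlift_none unlift_none.
apply: elm_eq => /=.
  apply/ffunP => x; rewrite -/(mumap i) -/(boxmap f).
  by case: (unliftP ord_max x) => [x'|] ->; rewrite ?HL ?HM ffunE ?liftK ?unlift_none.
rewrite -/(mumap i) -/(boxmap f) => j; rewrite /compfib.
case: (eqVneq j i) => [->|ne].
  rewrite dfwith_in /= /Lb /ebox1 /= Klem.
  set c0 := [ffun _ => ord0] : {ffun 'I_(fib f i) -> 'I_1}.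
  rewrite -/(boxmap c0).
  have em : (fib f i).+1 = fib (compf (mumap i) (boxmap f)) i.
    by rewrite (fib_ext _ HL HM) eqxx addn1.
  have en : 2%N = fib (mumap i) i by rewrite fib_mumap eqxx.
  rewrite -(@coeK _ _ _ (fib (compf (mumap i) (boxmap f)) i) _ _ em).
  congr (coe _ _).
  apply: (@gam_tr _ _ _ _ _ _ em en).
    move=> a; rewrite fibmap_val seq_mumap eqxx.
    have evy := ev_ext HL HM (cast_ord em a); rewrite eqxx in evy.
    have zA := enum_valP (cast_ord em a).
    move: evy zA; set z := enum_val _; rewrite inE => evy zA.
    have szS : size (map val (enum [pred x | f x == i])) = fib f i.
      by rewrite -size_enum_val.
    case: (unliftP ord_max a) => [a'|] Ea; rewrite Ea /= in evy *.
    - have lta : (a' < size (map val (enum [pred x | f x == i])))%N by rewrite szS.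
      have ba : bump (fib f i) a' = a' := @bump_lt (fib f i) a'.
      move: evy; rewrite nth_cat ba lta => evy.
      have zm : (z < m)%N by rewrite evy; apply: mem_enum_lt; exact: mem_nth.
      rewrite boxmap_lift lift_maxv ffunE.
      case: (unliftP ord_max z) => [z'|] Ez; last by rewrite Ez /= ltnn in zm.
      have fz : f z' = i by rewrite -HL -Ez; exact/eqP.
      by rewrite fz lift_maxv eqxx ffunE.
    - rewrite nth_cat szS ltnn subnn /= in evy.
      have -> : z = ord_max by apply: val_inj.
      rewrite !boxmap_max /=.
      by rewrite ifN_eq ?eqxx // ltn_eqF.
  move=> b; rewrite /compnu.
  have evb : val (enum_val (cast_ord en b)) = nth 0%N [:: val i; n] b.
    by rewrite ev_val seq_mumap eqxx.
  case: (unliftP ord_max b) => [b'|] Eb.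
  - have E : enum_val (cast_ord en b) = lift ord_max i.
      by apply: val_inj; rewrite evb Eb [b']ord1 /= bump_lt.
    have U : unlift ord_max (lift ord_max i) = Some i by apply: liftK.
    rewrite E Eb U.
    have U' : unlift ord_max (lift ord_max b') = Some b' by apply: liftK.
    rewrite coeK; last by rewrite fib_box U.
    rewrite coeK; last by rewrite fib_box U'.
    by rewrite coeK // fib1_card.
  - have E : enum_val (cast_ord en b) = ord_max.
      by apply: val_inj; rewrite evb Eb.
    rewrite E Eb !unlift_none.
    by do 3?[rewrite coeK; last by rewrite ?fib1_card ?fib_box ?unlift_none].
rewrite dfwith_out 1?eq_sym // /nuE /=.
have em : fib f j = fib (compf (mumap i) (boxmap f)) j.
  by rewrite (fib_ext _ HL HM) eq_sym (negbTE ne) addn0.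
have en : 1%N = fib (mumap i) j by rewrite fib_mumap eq_sym (negbTE ne).
rewrite (@gam_trR _ _ _ _ em en [ffun _ => ord0] _ (op_id O) (fun _ => coe _ (nu j))).
- by rewrite gam_u2 coeK.
- by move=> a; rewrite [in RHS]ffunE (ord1_val en).
- move=> b; rewrite /compnu.
  have ev : enum_val (cast_ord en b) = lift ord_max j.
    apply: val_inj; rewrite ev_val seq_mumap eq_sym (negbTE ne) /=.
    by rewrite [b]ord1 /= bump_lt.
  rewrite ev /= liftK coeK ?coeK //; first by rewrite fib1_card.
  by rewrite fib_box liftK.
Qed.

Lemma memf i' : i' \in [pred x | f x == f i'].
Proof. by rewrite inE. Qed.
Definition ER i' : 'I_(fib f (f i')) := enum_rank_in (memf i') i'.

Lemma partb i' :
  ecomp (Elm nu) (mu_i mu i') =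
  Elm (dfwith (nuE (f i')) (i := f i') (coe _ (Rb (nu (f i')) (ER i')))).
Proof.
have HL : forall x, compf f (mumap i') (lift ord_max x) = f x.
  by move=> x; rewrite /compf ffunE mumap_lift.
have HM : compf f (mumap i') ord_max = f i'.
  by rewrite /compf ffunE mumap_max.
apply: elm_eq => /=.
  apply/ffunP => x; rewrite -/(mumap i').
  by case: (unliftP ord_max x) => [x'|] ->; rewrite ?HL ?HM ffunE ?liftK ?unlift_none.
rewrite -/(mumap i') => j; rewrite /compfib /=.
case: (eqVneq j (f i')) => [->|ne].
  rewrite dfwith_in /Rb /mu_i Klem -/(mumap (ER i')).
  set p := ER i'.
  have em : (fib f (f i')).+1 = fib (compf f (mumap i')) (f i').
    by rewrite (fib_ext _ HL HM) eqxx addn1.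
  rewrite -(@coeK _ _ _ (fib (compf f (mumap i')) (f i')) _ _ em).
  congr (coe _ _); symmetry; apply: (@gam_trS _ _ _ em).
  - move=> a; rewrite fibmap_val.
    have evy := ev_ext HL HM (cast_ord em a); rewrite eqxx in evy.
    move: evy; set z := enum_val _ => evy.
    have szS : size (map val (enum [pred x | f x == f i'])) = fib f (f i').
      by rewrite -size_enum_val.
    case: (unliftP ord_max a) => [a'|] Ea; rewrite Ea /= in evy *.
    + have ba : bump (fib f (f i')) a' = a' := @bump_lt (fib f (f i')) a'.
      have lta : (a' < size (map val (enum [pred x | f x == f i'])))%N by rewrite szS.
      move: evy; rewrite nth_cat ba lta => evy.
      have zm : (z < m)%N by rewrite evy; apply: mem_enum_lt; exact: mem_nth.
      case: (unliftP ord_max z) => [z'|] Ez; last by rewrite Ez /= ltnn in zm.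
      rewrite Ez mumap_lift mumap_lift.
      have -> : val z' = nth 0%N (map val (enum [pred x | f x == f i'])) a'.
        by rewrite -evy Ez /= bump_lt.
      by rewrite index_uniq // uniq_enum_val.
    + move: evy; rewrite nth_cat szS ltnn subnn /= => evy.
      have -> : z = ord_max by apply: val_inj.
      by rewrite !mumap_max /p /ER er_val // memf.
  - move=> b; rewrite /compnu.
    have Eb : (enum_val b == i') = (b == p).
      apply/eqP/eqP => [E|->]; last by rewrite /p /ER enum_rankK_in // memf.
      by apply: enum_val_inj; rewrite E /p /ER enum_rankK_in // memf.
    rewrite Eb; case: ifP => Hb.
    + rewrite coeK; last by rewrite fib_mumap eq_sym Eb Hb.
      by rewrite coeK // fib_mumap eq_sym Hb.
    + rewrite coeK; last by rewrite fib_mumap eq_sym Eb Hb.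
      by rewrite coeK // fib_mumap eq_sym Hb.
rewrite dfwith_out 1?eq_sym // /nuE /=.
have em : fib f j = fib (compf f (mumap i')) j.
  by rewrite (fib_ext _ HL HM) eq_sym (negbTE ne) addn0.
rewrite (@gam_trS _ _ _ em [ffun x => x] _ (nu j) (fun _ => coe _ (op_id O))).
- by rewrite gam_u1 coeK.
- move=> a; rewrite fibmap_val [in RHS]ffunE.
  have evy := ev_ext HL HM (cast_ord em a).
  rewrite eq_sym (negbTE ne) cats0 in evy.
  move: evy; set z := enum_val _ => evy.
  have lta : (a < size (map val (enum [pred x | f x == j])))%N.
    by rewrite -size_enum_val.
  have zm : (z < m)%N by rewrite evy; apply: mem_enum_lt; exact: mem_nth.
  case: (unliftP ord_max z) => [z'|] Ez; last by rewrite Ez /= ltnn in zm.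
  rewrite Ez mumap_lift.
  have -> : val z' = nth 0%N (map val (enum [pred x | f x == j])) a.
    by rewrite -evy Ez /= bump_lt.
  by rewrite index_uniq // uniq_enum_val.
- move=> b; rewrite /compnu.
  have Hb : (enum_val b == i') = false.
    apply/negbTE; apply: contra ne => /eqP E.
    by have := enum_valP b; rewrite inE E eq_sym.
  rewrite Hb coeK; last by rewrite fib_mumap eq_sym Hb.
  by rewrite coeK // fib_id.
Qed.
End A.

Import GRing.Theory.
Local Open Scope ring_scope.

Section Rep.
Variable k : fieldType.
Variable O : operad k.
Local Notation OO := (ops O).
Variable F : rep O.
Local Notation ractF e := (@ract _ _ F _ _ e).

Lemma ract_lin m n (e : elm O m n) (a : k) u w :
  ractF e (a *: u + w) = a *: ractF e u + ractF e w.
Proof. by case: (rep_ax F) => H *; apply: H. Qed.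

Lemma ract0 m n (e : elm O m n) : ractF e 0 = 0.
Proof.
have H := ract_lin e 1 0 0; rewrite !scale1r addr0 in H.
by apply: (addrI (ractF e 0)); rewrite addr0 -H.
Qed.

Lemma ract_sum m n (e : elm O m n) (I : finType) (u : I -> robj F m) :
  ractF e (\sum_(i : I) u i) = \sum_(i : I) ractF e (u i).
Proof.
apply: big_morph; last exact: ract0.
by move=> x y; have := ract_lin e 1 x y; rewrite !scale1r.
Qed.

Lemma ract_comp m n p (e2 : elm O n p) (e1 : elm O m n) v :
  ractF (ecomp e2 e1) v = ractF e2 (ractF e1 v).
Proof. by case: (rep_ax F) => _ _ _ H; apply: H. Qed.

Lemma ract_dflin m n (f : {ffun 'I_m -> 'I_n}) (t : forall i, OO (fib f i)) i (a : k) x y w :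
  ractF (Elm (dfwith t (i := i) (a *: x + y))) w
  = a *: ractF (Elm (dfwith t (i := i) x)) w + ractF (Elm (dfwith t (i := i) y)) w.
Proof. by case: (rep_ax F) => _ H *; apply: H. Qed.

Lemma ract_dfsum m n (f : {ffun 'I_m -> 'I_n}) (t : forall i, OO (fib f i)) i
  (I : finType) (W : I -> OO (fib f i)) w :
  ractF (Elm (dfwith t (i := i) (\sum_(q : I) W q))) w
  = \sum_(q : I) ractF (Elm (dfwith t (i := i) (W q))) w.
Proof.
pose A := fun x => ractF (Elm (dfwith t (i := i) x)) w.
have Aadd : {morph A : x y / x + y >-> x + y}.
  by move=> x y; rewrite /A -{1}(scale1r x) ract_dflin scale1r.
have A0 : A 0 = 0.
  have H := Aadd 0 0; rewrite addr0 in H.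
  by apply: (addrI (A 0)); rewrite addr0 -H.
exact: (big_morph A Aadd A0).
Qed.
End Rep.

Import GRing.Theory.
Local Open Scope ring_scope.

Section Nat.
Variable k : fieldType.
Variable O : operad k.
Local Notation OO := (ops O).
Variable mu : OO 2.
Variable F : rep O.
Local Notation ractF e := (@ract _ _ F _ _ e).
Variables (m n : nat) (f : {ffun 'I_m -> 'I_n}) (nu : forall i, OO (fib f i)).
Variable v : robj F m.+1.

Definition T i (q : 'I_(fib f i)) :=
  ractF (Elm (dfwith (nuE nu i) (i := i) (coe _ (Rb mu (nu i) q)))) v.

Lemma T_ext i1 i (e : i1 = i) (q1 : 'I_(fib f i1)) (q : 'I_(fib f i)) :
  val q1 = val q -> T q1 = T q.
Proof. by subst i1 => /val_inj ->. Qed.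

Lemma natA : (forall i, leibniz_at mu (nu i)) ->
  mutilde mu (ractF (ebox1 (Elm nu)) v) = ractF (Elm nu) (mutilde mu v).
Proof.
move=> Hl; rewrite /mutilde ract_sum.
transitivity (\sum_(i < n) \sum_(q < fib f i) T q).
  apply: eq_bigr => i _.
  rewrite -(ract_comp (mu_i mu i) (ebox1 (Elm nu)) v) parta /Lb (Hl i) coe_sum ract_dfsum.
  done.
symmetry; under eq_bigr => i' _ do rewrite -ract_comp partb.
rewrite (partition_big (fun i' => f i') predT) //=.
apply: eq_bigr => i _.
transitivity (\sum_(x in [pred x : 'I_m | f x == i]) T (ER f x)) => //.
rewrite (big_enum_val (A := [pred x : 'I_m | f x == i])) /=.
apply: eq_bigr => q _.
have fq : f (enum_val q) = i by apply/eqP; exact: (enum_valP q).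
apply: (T_ext fq).
rewrite /ER er_val ?memf // fq.
rewrite ev_val index_uniq ?uniq_enum_val //.
by rewrite -size_enum_val.
Qed.
End Nat.

Import GRing.Theory.
Local Open Scope ring_scope.

Section Gen.
Variable k : fieldType.
Variable O : operad k.
Local Notation gam f := (@op_comp k O _ _ f).
Local Notation OO := (ops O).
Variable mu : OO 2.

Definition BT c (x : OO c) : forall j, OO (fib (boxmap ([ffun _ => ord0] : {ffun 'I_c -> 'I_1})) j) :=
  fun j => match unlift ord_max j with
           | Some j' => coe _ (coe (fib ([ffun _ => ord0] : {ffun 'I_c -> 'I_1}) j') x)
           | None => coe _ (op_id O) end.

Lemma LbE c (x : OO c) : Lb mu x = gam (boxmap [ffun _ => ord0]) mu (BT x).
Proof. by rewrite /Lb /ebox1 /= Klem. Qed.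

Lemma RbE c (x : OO c) p :
  Rb mu x p = gam (mumap p) x (fun j => if j == p then coe _ mu else coe _ (op_id O)).
Proof. by rewrite /Rb /mu_i Klem. Qed.

Lemma BT_dfwith c (x : OO c) :
  BT x = dfwith (BT 0) (i := lift ord_max ord0) (coe _ (coe (fib ([ffun _ => ord0] : {ffun 'I_c -> 'I_1}) ord0) x)).
Proof.
apply: functional_extensionality_dep => j.
case: (unliftP ord_max j) => [j'|] ->.
  rewrite [j']ord1 dfwith_in /BT.
  by have -> : unlift ord_max (lift ord_max (ord0 : 'I_1)) = Some ord0 by apply: liftK.
rewrite dfwith_out; last by rewrite lift_eqF.
by rewrite /BT unlift_none.
Qed.

Lemma Lb_lin c (a : k) (x y : OO c) : Lb mu (a *: x + y) = a *: Lb mu x + Lb mu y.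
Proof. by rewrite !LbE !(BT_dfwith (_ + _)) !coe_lin gam_linr -!BT_dfwith. Qed.

Lemma Rb_lin c (a : k) (x y : OO c) p : Rb mu (a *: x + y) p = a *: Rb mu x p + Rb mu y p.
Proof. by rewrite !RbE gam_linl. Qed.


Lemma leibE n (x : OO n) : leibniz_at mu x = (Lb mu x = \sum_(i < n) Rb mu x i).
Proof. by []. Qed.

Lemma P_lin n (a : k) (x y : OO n) :
  leibniz_at mu x -> leibniz_at mu y -> leibniz_at mu (a *: x + y).
Proof.
rewrite !leibE => Hx Hy; rewrite Lb_lin Hx Hy scaler_sumr -big_split.
by apply: eq_bigr => i _; rewrite Rb_lin.
Qed.

Lemma P_zero n : leibniz_at mu (0 : OO n).
Proof.
rewrite leibE.
have L0 : Lb mu (0 : OO n) = 0.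
  have H := Lb_lin 1 (0 : OO n) 0; rewrite !scale1r addr0 in H.
  by apply: (addrI (Lb mu (0 : OO n))); rewrite addr0 -H.
rewrite L0 big1 // => i _.
have H := Rb_lin 1 (0 : OO n) 0 i; rewrite !scale1r addr0 in H.
by apply: (addrI (Rb mu (0 : OO n) i)); rewrite addr0 -H.
Qed.

Lemma P_id : leibniz_at mu (op_id O).
Proof.
rewrite leibE big_ord1 [Rb _ _ _]comp1_id_mu LbE.
rewrite (@gam_trS _ _ _ _ _ (erefl 2%N) [ffun x => x] _ mu (fun _ => coe _ (op_id O))).
- by rewrite gam_u1 coe_id.
- move=> a; rewrite cast_ord_id [in RHS]ffunE.
  case: (unliftP ord_max a) => [a'|] ->; last by rewrite boxmap_max.
  by rewrite boxmap_lift !lift_maxv [a']ord1 ffunE.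
- move=> b; rewrite /BT.
  case: (unliftP ord_max b) => [b'|] ->.
    rewrite coeK; last by rewrite fib1_card.
    by rewrite coeK // fib_id.
  by rewrite coeK // fib_id.
Qed.

Lemma lm_additive_sum N p (g : lmap O N p) (I : finType) (x : I -> OO p) :
  g (\sum_(i : I) x i) = \sum_(i : I) g (x i).
Proof.
have g0 : g 0 = 0.
  have H := lm_lin g 1 0 0; rewrite !scale1r addr0 in H.
  by apply: (addrI (g 0)); rewrite addr0 -H.
apply: (big_morph g) => // u w.
by have := lm_lin g 1 u w; rewrite !scale1r.
Qed.

Lemma boxcomp m n (f : {ffun 'I_m -> 'I_n}) (mu0 : OO n) (nu : forall i, OO (fib f i)) :
  ebox1 (el_of (gam f mu0 nu)) = ecomp (ebox1 (el_of mu0)) (ebox1 (Elm nu)).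
Proof.
set c0m := [ffun _ => ord0] : {ffun 'I_m -> 'I_1}.
set c0n := [ffun _ => ord0] : {ffun 'I_n -> 'I_1}.
have Hmap : boxmap c0m = compf (boxmap c0n) (boxmap f).
  apply/ffunP => x; rewrite [in RHS]ffunE.
  case: (unliftP ord_max x) => [x'|] ->; last by rewrite !boxmap_max.
  by rewrite !boxmap_lift !ffunE.
apply: elm_eq => /=.
  exact: Hmap.
rewrite -/(boxmap c0n) -/(boxmap f) => j; rewrite /compfib /=.
case: (unliftP ord_max j) => [j'|] ->.
  have Ul : unlift ord_max (lift ord_max j') = Some j' by apply: liftK.
  rewrite ?Ul.
  rewrite [X in gam _ X _]coeK; last by rewrite fib1_card.
  rewrite [RHS]coeK; last by rewrite fib_box Ul.
  rewrite [RHS]coeK; last by rewrite fib1_card.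
  have em : m = fib (compf (boxmap c0n) (boxmap f)) (lift ord_max j').
    by rewrite -Hmap fib_box Ul fib1_card.
  have en : n = fib (boxmap c0n) (lift ord_max j') by rewrite fib_box Ul fib1_card.
  apply: (@gam_trR _ _ _ _ _ _ em en).
  - move=> a; rewrite fibmap_val seq_box Ul full_enum; last exact: fib1_full.
    have ev : enum_val (cast_ord em a) = lift ord_max a.
      apply: val_inj; rewrite ev_val.
      have -> : val (cast_ord em a) = val a by [].
      rewrite -Hmap seq_box Ul full_enum; last exact: fib1_full.
      by rewrite /= nth_iota // bump_lt.
    by rewrite ev boxmap_lift /= bump_lt index_iota0.
  - move=> b; rewrite /compnu.
    have ev : enum_val (cast_ord en b) = lift ord_max b.
      apply: val_inj; rewrite ev_val seq_box Ul full_enum; last exact: fib1_full.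
      by rewrite /= nth_iota // bump_lt.
    have Ub : unlift ord_max (lift ord_max b) = Some b by apply: liftK.
    rewrite ev Ub coeK //.
    by rewrite fib_box Ub.
rewrite [RHS]coeK; last by rewrite fib_box unlift_none.
have em : 1%N = fib (compf (boxmap c0n) (boxmap f)) ord_max.
  by rewrite -Hmap fib_box unlift_none.
have en : 1%N = fib (boxmap c0n) ord_max by rewrite fib_box unlift_none.
rewrite -[in RHS](gam_u2 ([ffun _ => ord0] : {ffun 'I_1 -> 'I_1}) (op_id O)).
apply: (@gam_trR _ _ _ _ _ _ em en).
- by move=> a; rewrite [in RHS]ffunE (ord1_val en).
- move=> b; rewrite /compnu.
  have ev : enum_val (cast_ord en b) = ord_max.
    apply: val_inj; rewrite ev_val.
    have -> : val (cast_ord en b) = val b by [].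
    by rewrite seq_box unlift_none [b]ord1.
  rewrite ev unlift_none coeK; last by rewrite fib_box unlift_none.
  by rewrite coeK // fib1_card.
Qed.

Lemma P_comp m n (f : {ffun 'I_m -> 'I_n}) (mu0 : OO n) (nu : forall i, OO (fib f i)) :
  leibniz_at mu mu0 -> (forall i, leibniz_at mu (nu i)) -> leibniz_at mu (gam f mu0 nu).
Proof.
move=> H0 Hi; rewrite leibE.
set Ga := gam f mu0 nu.
have C : ebox1 (el_of Ga) = ecomp (ebox1 (el_of mu0)) (ebox1 (Elm nu)).
  exact: boxcomp.
pose F := trep O m.+1.
pose phi0 := lm_id O m.+1.
have E1 : Lb mu Ga = (@ract _ _ F _ _ (ebox1 (el_of Ga)) phi0) mu by [].
rewrite E1 C ract_comp.
set psi := @ract _ _ F _ _ (ebox1 (Elm nu)) phi0.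
transitivity (psi (Lb mu mu0)); first by [].
rewrite (leibE mu0) in H0; rewrite H0 lm_additive_sum.
transitivity ((mutilde mu psi) mu0).
  by rewrite /mutilde lm_sum.
rewrite natA // /=.
transitivity ((@mutilde _ _ mu F _ phi0) Ga).
  by rewrite /comp1 Klem.
by rewrite /mutilde lm_sum.
Qed.
End Gen.

Import GRing.Theory.
Local Open Scope ring_scope.

Lemma theorem3p5_aux (k : fieldType) (O : operad k) (mu : ops O 2) :
  (mutilde_natural mu <-> leibniz mu) /\
  (forall S : forall n, ops O n -> Prop, generates S ->
     (forall n (nu : ops O n), S n nu -> leibniz_at mu nu) -> leibniz mu).
Proof.
have leib_nat : leibniz mu -> mutilde_natural mu.
  move=> Hl; split.
  - move=> F m n [f nu] v; apply: natA => i; exact: Hl.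
  - move=> F G al [Hlin Hnat] n v; rewrite /mutilde.
    have al0 : al n 0 = 0.
      have H := Hlin n 1 0 0; rewrite !scale1r addr0 in H.
      by apply: (addrI (al n 0)); rewrite addr0 -H.
    have alD : {morph al n : x y / x + y >-> x + y}.
      by move=> x y; have := Hlin n 1 x y; rewrite !scale1r.
    rewrite (big_morph (al n) alD al0).
    by apply: eq_bigr => i _; rewrite Hnat.
split; first by split; [exact: nat_leib | exact: leib_nat].
move=> S HS HSl n nu.
apply: (HS (fun n x => leibniz_at mu x)) => //.
- exact: P_id.
- by move=> ?; exact: P_zero.
- by move=> ? a x y Hx Hy; exact: P_lin.
- by move=> m' n' f mu0 nu0 H0 Hi; exact: P_comp.
Qed.

Close Scope ring_scope.

Theorem theorem3p5 (k : fieldType) (O : operad k) (mu : ops O 2) :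
  (mutilde_natural mu <-> leibniz mu) /\
  (forall S : forall n, ops O n -> Prop, generates S ->
     (forall n (nu : ops O n), S n nu -> leibniz_at mu nu) -> leibniz mu).
Proof. exact: theorem3p5_aux. Qed.
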